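(* Fix any total budget $\mathrm{TB}\in\mathbb N_0$. For every $k\in\mathbb N$, the disjunctive sum $1/2^k+1/2^k=1/2^{k-1}$.
   Context: Game forms are defined recursively: $G=\{G^{\mathcal L}\mid G^{\mathcal R}\}$ with finite sets of Left and Right options, and finite birthday. $0=\{\varnothing\mid\varnothing\}$, $1=\{0\mid\varnothing\}$. Dyadic game forms: $1/2^0=1$ and for $k\in\mathbb N$, $1/2^k=\{0\mid 1/2^{k-1}\}$. The budget set for total budget $\mathrm{TB}$ is $\mathcal B=\{0,\dots,\mathrm{TB},\hat 0,\dots,\widehat{\mathrm{TB}}\}$: state $p$ (resp. $\hat p$) means Left holds $p$ dollars and Right holds $\mathrm{TB}-p$, and Right (resp. Left) holds the tie-breaking marker. Play of $(G,\tilde p)$: at every position (terminal ones included) both players bid simultaneously, Left $\ell\in\{0,\dots,p\}$, Right $r\in\{0,\dots,\mathrm{TB}-p\}$. If Left holds the marker (state $\hat p$): if $\ell>r$ Left moves to $(G^L,\widehat{p-\ell})$, or, including the marker (allowed when $\ell\ge r$), to $(G^L,p-\ell)$; if $\ell=r$ Left wins, the marker passes to Right, play continues at $(G^L,p-\ell)$; if $\ell<r$ Right moves to $(G^R,\widehat{p+r})$. Symmetrically when Right holds the marker (state $p$): if $r>\ell$ Right moves to $(G^R,p+r)$ or, including the marker, to $(G^R,\widehat{p+r})$; if $r=\ell$ Right wins, the marker passes to Left, play continues at $(G^R,\widehat{p+r})$; if $r<\ell$ Left moves to $(G^L,p-\ell)$. A player who wins a bid but has no option loses. $o(G,\tilde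 p)\in\{\mathrm L,\mathrm R\}$ is the winner under optimal play; $\mathrm L>\mathrm R$. Disjunctive sum $G+H=\{G^{\mathcal L}+H,G+H^{\mathcal L}\mid G^{\mathcal R}+H,G+H^{\mathcal R}\}$. $G\ge H$ means $o(G+X,\tilde p)\ge o(H+X,\tilde p)$ for all game forms $X$ and all $\tilde p\in\mathcal B$; $G=H$ means $G\ge H$ and $H\ge G$. *)

(* Defs.v *)
From mathcomp Require Import all_boot.
Set Implicit Arguments. Unset Strict Implicit. Unset Printing Implicit Defensive.

Inductive game : Type := Game : seq game -> seq game -> game.

Definition gzero : game := Game [::] [::].
Definition gone : game := Game [:: gzero] [::].

(* dyadic game forms: dyad k = 1/2^k *)
Fixpoint dyad (k : nat) : game :=
  match k with
  | 0 => gone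
  | k'.+1 => Game [:: gzero] [:: dyad k']
  end.

Fixpoint gadd (G : game) : game -> game :=
  fix gaddG (H : game) : game :=
    match G, H with
    | Game gl gr, Game hl hr =>
      Game (map (fun x => gadd x H) gl ++ map gaddG hl)
           (map (fun x => gadd x H) gr ++ map gaddG hr)
    end.

(* Budget state: (p, m) with p = Left's dollars (Right holds TB - p);
   m = true means Left holds the tie-breaking marker (state \hat p),
   m = false means Right holds it (state p).
   winL TB G p m = true iff Left has a bid l in {0..p} such that for every Right bid r in {0..TB-p},
   Left wins under optimal continuation (the game is determined). *)
Fixpoint winL (TB : nat) (G : game) (p : nat) (m : bool) {struct G} : bool :=
  match G with
  | Game Ls Rs =>
    has (fun l : nat => all (fun r : nat =>
      if m then
        (if r < l then
           has (fun GL => winL TB GL (p - l) true || winL TB GL (p - l) false) Ls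
         else if l == r then
           has (fun GL => winL TB GL (p - l) false) Ls
         else
           all (fun GR => winL TB GR (p + r) true) Rs)
      else
        (if l < r then
           all (fun GR => winL TB GR (p + r) false && winL TB GR (p + r) true) Rs
         else if l == r then
           all (fun GR => winL TB GR (p + r) true) Rs
         else
           has (fun GL => winL TB GL (p - l) false) Ls))
      (iota 0 (TB - p).+1)) (iota 0 p.+1)
  end.

Inductive outcome : Type := L | R.

Definition o (TB : nat) (G : game) (p : nat) (m : bool) : outcome :=
  if winL TB G p m then L else R.

Definition outcome_le (a b : outcome) : bool :=
  match a, b with
  | L, R => false
  | _, _ => true
  end.

Definition game_ge (TB : nat) (G H : game) : Prop :=
  forall (X : game) (p : nat) (m : bool), p <= TB ->
    outcome_le (o TB (gadd H X) p m) (o TB (gadd G X) p m).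

Definition game_eq (TB : nat) (G H : game) : Prop :=
  game_ge TB G H /\ game_ge TB H G.

(* Main.v *)
Require Import Defs.
From mathcomp Require Import all_boot zify.
From Stdlib Require Import Classical.
Set Implicit Arguments. Unset Strict Implicit. Unset Printing Implicit Defensive.

Fixpoint inG (x : game) (s : seq game) : Prop :=
  match s with [::] => False | y :: t => y = x \/ inG x t end.

Lemma inG_cat x s t : inG x (s ++ t) <-> inG x s \/ inG x t.
Proof. elim: s => [|y s IH] /=; [tauto|]. rewrite IH; tauto. Qed.

Lemma inG_map x (f : game -> game) s : inG x (map f s) <-> exists y, inG y s /\ x = f y.
Proof.
elim: s => [|y s IH] /=; first by split=> // [[y []]].
rewrite IH; split.
- case=> [<-|[z [hz ->]]]; [by exists y; auto | by exists z; auto].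
- case=> z [[<-|hz] ->]; [by left | by right; exists z].
Qed.

Lemma has_inG (f : game -> bool) s : has f s <-> exists x, inG x s /\ f x.
Proof.
elim: s => [|y s IH] /=; first by split=> // [[x []]].
split.
- case/orP=> [h|h]; [by exists y; auto | by move/IH: h => [x [hx fx]]; exists x; auto].
- case=> x [[<-|hx] fx]; apply/orP; [by left | right; apply/IH; exists x; auto].
Qed.

Lemma all_inG (f : game -> bool) s : all f s <-> forall x, inG x s -> f x.
Proof.
elim: s => [|y s IH] /=; first by split.
split.
- case/andP=> hy hs x [<-|hx] //. by move/IH: hs; apply.
- move=> H; apply/andP; split; first by apply: H; left.
  by apply/IH => x hx; apply: H; right.
Qed.

Definition lefts (G : game) := let: Game l _ := G in l.
Definition rights (G : game) := let: Game _ r := G in r.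

Fixpoint game_ind' (P : game -> Prop)
  (H : forall ls rs, (forall g, inG g ls -> P g) -> (forall g, inG g rs -> P g) -> P (Game ls rs))
  (g : game) : P g :=
  match g with
  | Game ls rs =>
    let F := fix F (l : seq game) : forall x, inG x l -> P x :=
      match l with
      | [::] => fun x h => False_ind _ h
      | y :: t => fun x h => match h with
                  | or_introl e => eq_ind y P (game_ind' H y) x e
                  | or_intror h' => F t x h' end
      end in
    H ls rs (F ls) (F rs)
  end.

Definition lw (m : bool) (l r : nat) : bool := if m then r <= l else r < l.
Definition lopt (m : bool) (l r : nat) (m' : bool) : Prop := m' = false \/ (m = true /\ r < l /\ m' = true).
Definition ropt (m : bool) (l r : nat) (m' : bool) : Prop := m' = true \/ (m = false /\ l < r /\ m' = false).

Definition cnd TB G p m l r : Prop :=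
  (lw m l r -> exists GL m', inG GL (lefts G) /\ lopt m l r m' /\ winL TB GL (p - l) m') /\
  (~~ lw m l r -> forall GR m', inG GR (rights G) -> ropt m l r m' -> winL TB GR (p + r) m').

Definition condb TB Ls Rs p (m : bool) (l r : nat) : bool :=
      if m then
        (if r < l then
           has (fun GL => winL TB GL (p - l) true || winL TB GL (p - l) false) Ls
         else if l == r then
           has (fun GL => winL TB GL (p - l) false) Ls
         else
           all (fun GR => winL TB GR (p + r) true) Rs)
      else
        (if l < r then
           all (fun GR => winL TB GR (p + r) false && winL TB GR (p + r) true) Rs
         else if l == r then
           all (fun GR => winL TB GR (p + r) true) Rs
         else
           has (fun GL => winL TB GL (p - l) false) Ls).

Lemma winL_unf TB Ls Rs p m : winL TB (Game Ls Rs) p m =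
  has (fun l => all (fun r => condb TB Ls Rs p m l r) (iota 0 (TB - p).+1)) (iota 0 p.+1).
Proof. reflexivity. Qed.

Lemma gadd_unf al ar bl br : gadd (Game al ar) (Game bl br) =
  Game (map (fun x => gadd x (Game bl br)) al ++ map (fun y => gadd (Game al ar) y) bl)
       (map (fun x => gadd x (Game bl br)) ar ++ map (fun y => gadd (Game al ar) y) br).
Proof. reflexivity. Qed.

Lemma condbP TB Ls Rs p m l r : condb TB Ls Rs p m l r <-> cnd TB (Game Ls Rs) p m l r.
Proof.
rewrite /condb /cnd /lw /lopt /ropt /=.
case: m; case: (ltngtP l r) => h /=.
- rewrite all_inG; split.
  + move=> H; split=> // _ GR m' hGR [->|[//]]; exact: H.
  + case=> _ H GR hGR; apply: H => //; by left.
- rewrite has_inG; split.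
  + move=> [GL [hGL /orP[H|H]]]; split=> //= _.
    * by exists GL, true; split=> //; split=> //; right.
    * by exists GL, false; split=> //; split=> //; left.
  + case=> /(_ isT) [GL [m' [hGL [hm H]]]] _; exists GL; split=> //.
    by case: m' H {hm} => ->; rewrite ?orbT.
- rewrite has_inG; split.
  + move=> [GL [hGL H]]; split=> //= _.
    by exists GL, false; split=> //; split=> //; left.
  + case=> /(_ isT) [GL [m' [hGL [[->|[_ [//]]] H]]]] _; by exists GL.
- rewrite all_inG; split.
  + move=> H; split=> // _ GR m' hGR [->|[_ [_ ->]]]; by case/andP: (H _ hGR).
  + case=> _ H GR hGR; apply/andP; split; apply: H => //; [by right | by left].
- rewrite has_inG; split.
  + move=> [GL [hGL H]]; split=> //= _.
    by exists GL, false; split=> //; split=> //; left.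
  + case=> /(_ isT) [GL [m' [hGL [[->|[//]] H]]]] _; by exists GL.
- rewrite all_inG; split.
  + move=> H; split=> // _ GR m' hGR [->|[_ [//]]]; exact: H.
  + case=> _ H GR hGR; apply: H => //; by left.
Qed.

Lemma winP TB G p m : winL TB G p m <->
  exists l, l <= p /\ forall r, r <= TB - p -> cnd TB G p m l r.
Proof.
case: G => Ls Rs; rewrite winL_unf.
split.
- case/hasP=> l; rewrite mem_iota => /andP[_ hl] /allP H.
  exists l; split; first by lia.
  move=> r hr; apply/condbP; apply: H; rewrite mem_iota; lia.
- case=> l [hl H]; apply/hasP; exists l; first by rewrite mem_iota; lia.
  apply/allP => r; rewrite mem_iota => hr; apply/condbP; apply: H; lia.
Qed.
Lemma lefts_add A B : lefts (gadd A B) = map (fun x => gadd x B) (lefts A) ++ map (gadd A) (lefts B).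
Proof. by case: A => al ar; case: B. Qed.
Lemma rights_add A B : rights (gadd A B) = map (fun x => gadd x B) (rights A) ++ map (gadd A) (rights B).
Proof. by case: A => al ar; case: B. Qed.

Lemma inG_add x s t (f g : game -> game) : inG x (map f s ++ map g t) <->
  (exists a, inG a s /\ x = f a) \/ (exists b, inG b t /\ x = g b).
Proof. by rewrite inG_cat !inG_map. Qed.

Lemma inG_lefts_add x A B : inG x (lefts (gadd A B)) <->
  (exists a, inG a (lefts A) /\ x = gadd a B) \/ (exists b, inG b (lefts B) /\ x = gadd A b).
Proof. by rewrite lefts_add inG_add. Qed.
Lemma inG_rights_add x A B : inG x (rights (gadd A B)) <->
  (exists a, inG a (rights A) /\ x = gadd a B) \/ (exists b, inG b (rights B) /\ x = gadd A b).
Proof. by rewrite rights_add inG_add. Qed.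

Inductive sim : game -> game -> Prop :=
| SimI A B : (forall a, inG a (lefts A) -> exists b, inG b (lefts B) /\ sim a b) ->
             (forall b, inG b (rights B) -> exists a, inG a (rights A) /\ sim a b) -> sim A B.

Lemma sim_inv A B : sim A B ->
  (forall a, inG a (lefts A) -> exists b, inG b (lefts B) /\ sim a b) /\
  (forall b, inG b (rights B) -> exists a, inG a (rights A) /\ sim a b).
Proof. by case. Qed.

Lemma sim_win TB A : forall B p m, sim A B -> winL TB A p m -> winL TB B p m.
Proof.
elim/game_ind': A => al ar IHl IHr B p m hs.
case/sim_inv: hs => hl hr.
move=> /winP [l [hl' H]]; apply/winP; exists l; split=> // r hr'.
case: (H r hr') => HL HR; split.
- move=> hlw; case: (HL hlw) => GL [m' [hGL [ho hw]]].
  case: (hl _ hGL) => b [hb hs]; exists b, m'; split=> //; split=> //.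
  exact: IHl hs hw.
- move=> hlw GR m' hGR ho; case: (hr _ hGR) => a [ha hs].
  exact: IHr ha _ _ _ hs (HR hlw a m' ha ho).
Qed.
Lemma sim_refl A : sim A A.
Proof.
elim/game_ind': A => al ar IHl IHr; constructor=> /= a ha; exists a; split=> //; auto.
Qed.

Lemma sim_addr X : forall A B, sim A B -> sim (gadd A X) (gadd B X).
Proof.
elim/game_ind': X => xl xr IHxl IHxr.
elim/game_ind' => al ar IHl IHr B hs; case/sim_inv: (hs) => hl hr; simpl in hl, hr.
apply: SimI.
- move=> c /inG_lefts_add [[a [ha ->]]|[x [hx ->]]].
  + case: (hl a ha) => b [hb hab]; exists (gadd b (Game xl xr)); split; last exact: IHl.
    by apply/inG_lefts_add; left; exists b.
  + exists (gadd B x); split; last exact: IHxl.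
    by apply/inG_lefts_add; right; exists x.
- move=> c /inG_rights_add [[b [hb ->]]|[x [hx ->]]].
  + case: (hr b hb) => a [ha hab]; exists (gadd a (Game xl xr)); split; last exact: IHr.
    by apply/inG_rights_add; left; exists a.
  + exists (gadd (Game al ar) x); split; last exact: IHxr.
    by apply/inG_rights_add; right; exists x.
Qed.

Lemma sim_addl X : forall A B, sim A B -> sim (gadd X A) (gadd X B).
Proof.
elim/game_ind': X => xl xr IHxl IHxr.
elim/game_ind' => al ar IHl IHr B hs; case/sim_inv: (hs) => hl hr; simpl in hl, hr.
apply: SimI.
- move=> c /inG_lefts_add [[x [hx ->]]|[a [ha ->]]].
  + exists (gadd x B); split; last exact: IHxl.
    by apply/inG_lefts_add; left; exists x.
  + case: (hl a ha) => b [hb hab]; exists (gadd (Game xl xr) b); split; last exact: IHl.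
    by apply/inG_lefts_add; right; exists b.
- move=> c /inG_rights_add [[x [hx ->]]|[b [hb ->]]].
  + exists (gadd x (Game al ar)); split; last exact: IHxr.
    by apply/inG_rights_add; left; exists x.
  + case: (hr b hb) => a [ha hab]; exists (gadd (Game xl xr) a); split; last exact: IHr.
    by apply/inG_rights_add; right; exists a.
Qed.

Lemma sim_comm A : forall B, sim (gadd A B) (gadd B A).
Proof.
elim/game_ind': A => al ar IHal IHar.
elim/game_ind' => bl br IHbl IHbr.
apply: SimI.
- move=> c /inG_lefts_add [[a [ha ->]]|[b [hb ->]]].
  + exists (gadd (Game bl br) a); split; last exact: IHal.
    by apply/inG_lefts_add; right; exists a.
  + exists (gadd b (Game al ar)); split; last exact: IHbl.
    by apply/inG_lefts_add; left; exists b.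
- move=> c /inG_rights_add [[b [hb ->]]|[a [ha ->]]].
  + exists (gadd (Game al ar) b); split; last exact: IHbr.
    by apply/inG_rights_add; right; exists b.
  + exists (gadd a (Game bl br)); split; last exact: IHar.
    by apply/inG_rights_add; left; exists a.
Qed.

Lemma sim_assoc A : forall B C, sim (gadd (gadd A B) C) (gadd A (gadd B C)) /\
                               sim (gadd A (gadd B C)) (gadd (gadd A B) C).
Proof.
elim/game_ind': A => al ar IHal IHar.
elim/game_ind' => bl br IHbl IHbr.
elim/game_ind' => cl cr IHcl IHcr.
set A := Game al ar; set B := Game bl br; set C := Game cl cr.
split; apply: SimI.
- move=> z /inG_lefts_add [[y [/inG_lefts_add [[a [ha ->]]|[b [hb ->]]] ->]]|[c [hc ->]]].
  + exists (gadd a (gadd B C)); split; last by case: (IHal a ha B C).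
    by apply/inG_lefts_add; left; exists a.
  + exists (gadd A (gadd b C)); split; last by case: (IHbl b hb C).
    apply/inG_lefts_add; right; exists (gadd b C); split=> //.
    by apply/inG_lefts_add; left; exists b.
  + exists (gadd A (gadd B c)); split; last by case: (IHcl c hc).
    apply/inG_lefts_add; right; exists (gadd B c); split=> //.
    by apply/inG_lefts_add; right; exists c.
- move=> z /inG_rights_add [[a [ha ->]]|[y [/inG_rights_add [[b [hb ->]]|[c [hc ->]]] ->]]].
  + exists (gadd (gadd a B) C); split; last by case: (IHar a ha B C).
    apply/inG_rights_add; left; exists (gadd a B); split=> //.
    by apply/inG_rights_add; left; exists a.
  + exists (gadd (gadd A b) C); split; last by case: (IHbr b hb C).
    apply/inG_rights_add; left; exists (gadd A b); split=> //.
    by apply/inG_rights_add; right; exists b.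
  + exists (gadd (gadd A B) c); split; last by case: (IHcr c hc).
    by apply/inG_rights_add; right; exists c.
- move=> z /inG_lefts_add [[a [ha ->]]|[y [/inG_lefts_add [[b [hb ->]]|[c [hc ->]]] ->]]].
  + exists (gadd (gadd a B) C); split; last by case: (IHal a ha B C).
    apply/inG_lefts_add; left; exists (gadd a B); split=> //.
    by apply/inG_lefts_add; left; exists a.
  + exists (gadd (gadd A b) C); split; last by case: (IHbl b hb C).
    apply/inG_lefts_add; left; exists (gadd A b); split=> //.
    by apply/inG_lefts_add; right; exists b.
  + exists (gadd (gadd A B) c); split; last by case: (IHcl c hc).
    by apply/inG_lefts_add; right; exists c.
- move=> z /inG_rights_add [[y [/inG_rights_add [[a [ha ->]]|[b [hb ->]]] ->]]|[c [hc ->]]].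
  + exists (gadd a (gadd B C)); split; last by case: (IHar a ha B C).
    by apply/inG_rights_add; left; exists a.
  + exists (gadd A (gadd b C)); split; last by case: (IHbr b hb C).
    apply/inG_rights_add; right; exists (gadd b C); split=> //.
    by apply/inG_rights_add; left; exists b.
  + exists (gadd A (gadd B c)); split; last by case: (IHcr c hc).
    apply/inG_rights_add; right; exists (gadd B c); split=> //.
    by apply/inG_rights_add; right; exists c.
Qed.

Lemma gadd0l G : gadd gzero G = G.
Proof.
elim/game_ind': G => gl gr IHl IHr.
have E : forall s, (forall g, inG g s -> gadd gzero g = g) -> map (gadd gzero) s = s.
  elim=> [|x s IH] //= H; rewrite H; last by left.
  by rewrite IH // => g hg; apply: H; right.
by rewrite /gzero gadd_unf /= !E.
Qed.

Lemma gadd0r G : gadd G gzero = G.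
Proof.
elim/game_ind': G => gl gr IHl IHr.
have E : forall s, (forall g, inG g s -> gadd g gzero = g) -> map (fun x => gadd x gzero) s = s.
  elim=> [|x s IH] //= H; rewrite H; last by left.
  by rewrite IH // => g hg; apply: H; right.
by rewrite /gzero gadd_unf /= !cats0 !E.
Qed.
Lemma mono_step TB G : forall q, q < TB ->
  (forall m, winL TB G q m -> winL TB G q.+1 m) /\ (winL TB G q true -> winL TB G q.+1 false).
Proof.
elim/game_ind': G => Ls Rs IHl IHr q hq.
have S : forall m, winL TB (Game Ls Rs) q m -> winL TB (Game Ls Rs) q.+1 m.
  move=> m /winP [l [hl H]]; apply/winP; exists l; split; first by lia.
  move=> r hr; case: (H r ltac:(lia)) => HL HR; split.
  - move=> hlw; case: (HL hlw) => GL [m' [hGL [ho hw]]].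
    exists GL, m'; split=> //; split=> //.
    have -> : q.+1 - l = (q - l).+1 by lia.
    by case: (IHl GL hGL (q - l) ltac:(lia)) => S _; apply: S.
  - move=> hlw GR m' hGR ho; have := HR hlw GR m' hGR ho.
    have -> : q.+1 + r = (q + r).+1 by lia.
    by case: (IHr GR hGR (q + r) ltac:(lia)) => S _; apply: S.
split=> //.
move=> /winP [l [hl H]]; apply/winP.
case: (leqP l (TB - q)) => hlt.
- exists l.+1; split; first by lia.
  move=> r hr; split.
  + rewrite /lw => hlw.
    case: (H l hlt) => HL _.
    case: (HL ltac:(rewrite /lw; lia)) => GL [m' [hGL [ho hw]]].
    exists GL, false; split=> //; split; first by left.
    have -> : q.+1 - l.+1 = q - l by lia.
    by case: ho => [<-|[_ [h _]]] //; move: h; rewrite ltnn.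
  + rewrite /lw => hlw GR m' hGR ho.
    case: (H r ltac:(lia)) => _ HR.
    have hw := HR ltac:(rewrite /lw; lia) GR true hGR ltac:(by left).
    have -> : q.+1 + r = (q + r).+1 by lia.
    case: (IHr GR hGR (q + r) ltac:(lia)) => S1 S2.
    case: ho => [->|[_ [_ ->]]]; [exact: S1 | exact: S2].
- exists l; split; first by lia.
  move=> r hr; split.
  + move=> _.
    case: (H r ltac:(lia)) => HL _.
    case: (HL ltac:(rewrite /lw; lia)) => GL [m' [hGL [ho hw]]].
    exists GL, false; split=> //; split; first by left.
    have -> : q.+1 - l = (q - l).+1 by lia.
    case: (IHl GL hGL (q - l) ltac:(lia)) => S1 S2.
    by case: m' {ho} hw => hw; [apply: S2 | apply: S1].
  + rewrite /lw => hlw; exfalso; move: hlw; apply/negP/negPn; lia.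
Qed.

Lemma mono_same TB G q q' m : q <= q' -> q' <= TB -> winL TB G q m -> winL TB G q' m.
Proof.
move=> h1; have [k E] : exists k, q' = q + k by exists (q' - q); lia.
subst q'; clear h1; elim: k => [|k IH] h2; first by rewrite addn0.
move=> hw; have : winL TB G (q + k) m by apply: IH => //; lia.
have hk : q + k < TB by lia.
rewrite addnS; case: (@mono_step TB G (q + k) hk) => S _; exact: S.
Qed.

Lemma mono_tf TB G q q' : q < q' -> q' <= TB -> winL TB G q true -> winL TB G q' false.
Proof.
move=> h1 h2 hw.
case: (@mono_step TB G q ltac:(lia)) => _ S.
apply: (mono_same (q := q.+1)) => //; exact: S.
Qed.
Definition EE TB D := forall Y p m, p <= TB -> winL TB Y p m -> winL TB (gadd D Y) p m.
Definition FF TB D := forall Y p, p <= TB -> winL TB Y p false -> winL TB (gadd D Y) p true.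

Lemma SN TB D Y p m l r m' : EE TB D -> FF TB D -> p <= TB -> r <= TB - p ->
  ~~ lw m l r -> ropt m l r m' -> winL TB Y p m -> winL TB (gadd D Y) (p + r) m'.
Proof.
move=> hE hF hp hr; rewrite /lw /ropt; case: m => hlw ho hw.
- case: ho => [->|[//]]; apply: hE; first by lia.
  apply: (mono_same (q := p)) => //; lia.
- case: ho => [->|[_ [_ ->]]].
  + apply: hF; first by lia.
    apply: (mono_same (q := p)) => //; lia.
  + apply: hE; first by lia.
    apply: (mono_same (q := p)) => //; lia.
Qed.

Lemma E_gen TB D : (forall DR, inG DR (rights D) -> EE TB DR /\ FF TB DR) -> EE TB D.
Proof.
move=> hD Y; elim/game_ind': Y => yl yr IHl IHr p m hp hw0; case/winP: (hw0) => l [hl H].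
apply/winP; exists l; split=> // r hr; case: (H r hr) => HL HR; split.
- move=> hlw; case: (HL hlw) => GL [m' [hGL [ho hw]]].
  exists (gadd D GL), m'; split; last split=> //.
  + by apply/inG_lefts_add; right; exists GL.
  + by apply: IHl => //; lia.
- move=> hlw GR m' /inG_rights_add [[DR [hDR ->]]|[y [hy ->]]] ho.
  + case: (hD DR hDR) => hE hF; exact: (SN hE hF hp hr hlw ho hw0).
  + apply: IHr => //; first by lia.
    exact: HR.
Qed.

Lemma F_gen TB D : inG gzero (lefts D) -> EE TB D ->
  (forall DR, inG DR (rights D) -> EE TB DR /\ FF TB DR) -> FF TB D.
Proof.
move=> h0 hE hD Y p hp hw0; case/winP: (hw0) => l [hl H].
apply/winP; exists l; split=> // r hr; split.
- rewrite /lw => hlw.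
  case: (ltngtP r l) hlw => // h _.
  + case: (H r hr) => /(_ h) [GL [m' [hGL [ho hw]]]] _.
    have hm' : m' = false by case: ho => [//|[]].
    subst m'; exists (gadd D GL), false; split.
      by apply/inG_lefts_add; right; exists GL.
    split; first by left.
    apply: hE => //; lia.
  + subst r; case: l hl hr H => [|l] hl hr H.
    * exists Y, false; split.
        apply/inG_lefts_add; left; exists gzero; split=> //; by rewrite gadd0l.
      split; first by left.
      by rewrite subn0.
    * case: (H l ltac:(lia)) => /(_ ltac:(by rewrite /lw)) [GL [m' [hGL [ho hw]]]] _.
      have hm' : m' = false by case: ho => [//|[]].
      subst m'; exists (gadd D GL), false; split.
        by apply/inG_lefts_add; right; exists GL.
      split; first by left.
      apply: hE => //; lia.
- move=> hlw GR m' /inG_rights_add [[DR [hDR ->]]|[y [hy ->]]] ho.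
  + case: (hD DR hDR) => hE' hF'.
    have ho' : m' = true by case: ho => [//|[]].
    subst m'; apply: (SN (m := false) (l := l)) => //.
      by move: hlw; rewrite /lw; lia.
    by left.
  + have ho' : m' = true by case: ho => [//|[]].
    subst m'.
    case: (H r hr) => _ /(_ ltac:(move: hlw; rewrite /lw; lia)) HR.
    apply: hE; first by lia.
    apply: HR => //; by left.
Qed.

Lemma EF_dyad TB k : EE TB (dyad k) /\ FF TB (dyad k).
Proof.
elim: k => [|k IH].
- have hE : EE TB (dyad 0) by apply: E_gen.
  split=> //; apply: F_gen => //; by left.
- have hD : forall DR, inG DR (rights (dyad k.+1)) -> EE TB DR /\ FF TB DR.
    by move=> DR /= [<-|].
  have hE : EE TB (dyad k.+1) by apply: E_gen.
  split=> //; apply: F_gen => //; by left.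
Qed.
Definition LE TB A B := forall X p m, p <= TB -> winL TB (gadd A X) p m -> winL TB (gadd B X) p m.

Lemma le_lock TB A B :
  (forall a, inG a (lefts A) -> exists b, inG b (lefts B) /\ LE TB a b) ->
  (forall b, inG b (rights B) -> exists a, inG a (rights A) /\ LE TB a b) -> LE TB A B.
Proof.
move=> hl hr X; elim/game_ind': X => xl xr IHl IHr p m hp /winP [l [hl' H]].
apply/winP; exists l; split=> // r hr'; case: (H r hr') => HL HR; split.
- move=> hlw; case: (HL hlw) => GL [m' [/inG_lefts_add [[a [ha ->]]|[x [hx ->]]] [ho hw]]].
  + case: (hl a ha) => b [hb hab]; exists (gadd b (Game xl xr)), m'; split.
      by apply/inG_lefts_add; left; exists b.
    split=> //; apply: hab => //; lia.
  + exists (gadd B x), m'; split.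
      by apply/inG_lefts_add; right; exists x.
    split=> //; apply: IHl => //; lia.
- move=> hlw GR m' /inG_rights_add [[b [hb ->]]|[x [hx ->]]] ho.
  + case: (hr b hb) => a [ha hab]; apply: hab; first by lia.
    apply: HR => //; by apply/inG_rights_add; left; exists a.
  + apply: IHr => //; first by lia.
    apply: HR => //; by apply/inG_rights_add; right; exists x.
Qed.

Lemma le_dd TB k : LE TB (dyad k.+1) (dyad k).
Proof.
elim: k => [|k IH]; apply: le_lock.
- move=> a /= [<-|//]; exists gzero; split; first by left.
  by move=> X p m _.
- by [].
- move=> a /= [<-|//]; exists gzero; split; first by left.
  by move=> X p m _.
- move=> b /= [<-|//]; exists (dyad k.+1); split=> //; by left.
Qed.

Lemma Hd_gen TB D1 D0 : rights D1 = [:: D0] -> lefts D1 = [:: gzero] -> lefts D0 = [:: gzero] ->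
  LE TB D1 D0 ->
  (forall DR, inG DR (rights D0) -> forall X q, q <= TB ->
     winL TB (gadd D0 X) q false -> winL TB (gadd DR X) q true) ->
  forall X p, p <= TB -> winL TB (gadd D1 X) p false -> winL TB (gadd D0 X) p true.
Proof.
move=> hR1 hL1 hL0 hle hDR X; elim/game_ind': X => xl xr IHl IHr p hp hw0.
case/winP: (hw0) => l [hl H].
case: l hl H => [|l] hl H.
  case: (H 0 ltac:(lia)) => _ /(_ isT) HR; rewrite -[p]addn0.
  apply: HR; last by left.
  by apply/inG_rights_add; left; exists D0; split=> //; rewrite hR1; left.
apply/winP; exists l.+1; split=> // r hr; split.
- rewrite /lw => hlw.
  have hr0 : (if r < l.+1 then r else l) <= TB - p by case: (ltnP r l.+1) => h; lia.
  have hlw0 : lw false l.+1 (if r < l.+1 then r else l) by rewrite /lw; case: (ltnP r l.+1) => h //; lia.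
  case: (H _ hr0) => /(_ hlw0) [GL [m' [hGL [ho hw]]]] _.
  have hm' : m' = false by case: ho => [//|[]].
  subst m'.
  case/inG_lefts_add: hGL => [[a [ha E]]|[x [hx E]]]; subst GL.
  + move: ha; rewrite hL1 => -[Ea|//]; subst a.
    exists (gadd gzero (Game xl xr)), false; split.
      by apply/inG_lefts_add; left; exists gzero; split=> //; rewrite hL0; left.
    by split=> //; left.
  + case: (ltngtP r l.+1) hlw => // hrl _.
    * exists (gadd D0 x), true; split.
        by apply/inG_lefts_add; right; exists x.
      split; first by right.
      by apply: IHl => //; lia.
    * exists (gadd D0 x), false; split.
        by apply/inG_lefts_add; right; exists x.
      split; first by left.
      by apply: hle => //; lia.
- rewrite /lw => hlw GR m' hGR ho.
  have hm' : m' = true by case: ho => [//|[]].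
  subst m'.
  case: (H r hr) => _ /(_ ltac:(rewrite /lw; lia)) HR.
  case/inG_rights_add: hGR => [[DR [hDR0 ->]]|[x [hx ->]]].
  + apply: (hDR DR hDR0); first by lia.
    apply: HR; last by right; split=> //; split=> //; lia.
    by apply/inG_rights_add; left; exists D0; split=> //; rewrite hR1; left.
  + apply: IHr => //; first by lia.
    apply: HR; last by right; split=> //; split=> //; lia.
    by apply/inG_rights_add; right; exists x.
Qed.

Lemma Hd TB k : forall X p, p <= TB -> winL TB (gadd (dyad k.+1) X) p false -> winL TB (gadd (dyad k) X) p true.
Proof.
elim: k => [|k IHk]; apply: Hd_gen => //; try exact: le_dd.
move=> DR /= [<-|//]; exact: IHk.
Qed.
Lemma lefts_dyad k : lefts (dyad k) = [:: gzero].
Proof. by case: k. Qed.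

Lemma G1 TB k : forall X p m, p <= TB -> winL TB (gadd (dyad k) X) p m ->
  winL TB (gadd (gadd (dyad k.+1) (dyad k.+1)) X) p m.
Proof.
have [hE hF] := EF_dyad TB k.+1.
elim/game_ind' => xl xr IHl IHr p m hp hw0; case/winP: (hw0) => l [hl H].
apply/winP; exists l; split=> // r hr; case: (H r hr) => HL HR; split.
- move=> hlw; case: (HL hlw) => GL [m' [hGL [ho hw]]].
  case/inG_lefts_add: hGL => [[a [ha E]]|[x [hx E]]]; subst GL.
  + move: ha; rewrite lefts_dyad => -[Ea|//]; subst a; rewrite gadd0l in hw.
    exists (gadd (dyad k.+1) (Game xl xr)), m'; split.
      apply/inG_lefts_add; left; exists (dyad k.+1); split=> //.
      apply/inG_lefts_add; left; exists gzero; split; last by rewrite gadd0l.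
      by left.
    split=> //; apply: hE => //; lia.
  + exists (gadd (gadd (dyad k.+1) (dyad k.+1)) x), m'; split.
      by apply/inG_lefts_add; right; exists x.
    split=> //; apply: IHl => //; lia.
- move=> hlw GR m' hGR ho.
  have hSN : winL TB (gadd (dyad k.+1) (gadd (dyad k) (Game xl xr))) (p + r) m' by exact: (SN hE hF hp hr hlw ho hw0).
  have h1 : winL TB (gadd (gadd (dyad k.+1) (dyad k)) (Game xl xr)) (p + r) m'.
    by apply: sim_win hSN; case: (sim_assoc (dyad k.+1) (dyad k) (Game xl xr)).
  case/inG_rights_add: hGR => [[y [hy E]]|[x [hx E]]]; subst GR.
  + case/inG_rights_add: hy => [[a [ha E]]|[a [ha E]]]; subst y; move: ha => -[Ea|//]; subst a.
    * apply: sim_win h1; apply: sim_addr; exact: sim_comm.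
    * exact: h1.
  + apply: IHr => //; first by lia.
    apply: HR => //; by apply/inG_rights_add; right; exists x.
Qed.
Lemma G2_gen TB D d : lefts D = [:: gzero] -> rights D = [:: d] -> LE TB D d ->
  (forall X q, q <= TB -> winL TB (gadd D X) q false -> winL TB (gadd d X) q true) ->
  (forall DR, inG DR (rights d) -> forall X q m, q <= TB ->
      winL TB (gadd (gadd D d) X) q m -> winL TB (gadd DR X) q m) ->
  forall X p m, p <= TB -> winL TB (gadd (gadd D D) X) p m -> winL TB (gadd d X) p m.
Proof.
move=> hL hR hle hH hDR.
elim/game_ind' => xl xr IHl IHr p m hp hw0; case/winP: (hw0) => l [hl H].
case E: (winL TB (gadd d (Game xl xr)) p m) => //; exfalso.
have nW : ~ winL TB (gadd d (Game xl xr)) p m by rewrite E.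
have [r hr] : exists r, ~ (r <= TB - p -> cnd TB (gadd d (Game xl xr)) p m l r).
  apply: not_all_ex_not => hall; apply: nW; apply/winP; exists l; split=> //.
have [hr' nc] := imply_to_and _ _ hr.
case: (H r hr') => HL HR.
case hlw: (lw m l r).
- have nL : ~ exists GL m', inG GL (lefts (gadd d (Game xl xr))) /\ lopt m l r m' /\ winL TB GL (p - l) m'.
    move=> hex; apply: nc; split=> // ; by rewrite hlw.
  case: (HL hlw) => GL [m' [hGL [ho hw]]].
  case/inG_lefts_add: hGL => [[y [hy Ey]]|[x [hx Ex]]]; subst GL.
  + have Ey' : y = D.
      case/inG_lefts_add: hy => [[a [ha Ea]]|[a [ha Ea]]]; subst y; move: ha; rewrite hL => -[Ea|//]; subst a.
      * by rewrite gadd0l.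
      * by rewrite gadd0r.
    subst y; apply: nW.
    case: m' ho hw => ho hw.
    * case: ho => [//|[hm [hrl _]]]; subst m.
      apply: (mono_same (q := p - l)); [lia | lia | apply: hle => //; lia].
    * destruct m.
      - apply: (mono_same (q := p - l)); [lia | lia | apply: hH => //; lia].
      - apply: (mono_same (q := p - l)); [lia | lia | apply: hle => //; lia].
  + apply: nL; exists (gadd d x), m'; split.
      by apply/inG_lefts_add; right; exists x.
    split=> //; apply: IHl => //; lia.
- have [GR hGR] : exists GR, ~ forall m', inG GR (rights (gadd d (Game xl xr))) -> ropt m l r m' -> winL TB GR (p + r) m'.
    apply: not_all_ex_not => hall; apply: nc; split; first by rewrite hlw.
    move=> _ GR m'; exact: hall.
  have [m' hm'] := not_all_ex_not _ _ hGR.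
  have [hin hm2] := imply_to_and _ _ hm'.
  have [ho nw] := imply_to_and _ _ hm2.
  apply: nw.
  case/inG_rights_add: hin => [[DR [hDR' E1]]|[x [hx E1]]]; subst GR.
  + apply: (hDR DR hDR'); first by lia.
    apply: HR => //; first by rewrite hlw.
    apply/inG_rights_add; left; exists (gadd D d); split=> //.
    by apply/inG_rights_add; right; exists d; split=> //; rewrite hR; left.
  + apply: IHr => //; first by lia.
    apply: HR => //; first by rewrite hlw.
    by apply/inG_rights_add; right; exists x.
Qed.

Lemma G2 TB k : forall X p m, p <= TB -> winL TB (gadd (gadd (dyad k.+1) (dyad k.+1)) X) p m ->
  winL TB (gadd (dyad k) X) p m.
Proof.
elim: k => [|k IHk]; apply: G2_gen => //; try exact: le_dd; try exact: Hd.
move=> DR /= [<-|//] X q m hq hw.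
apply: IHk => //.
have h1 : winL TB (gadd (dyad k.+2) (gadd (dyad k.+1) X)) q m.
  by apply: sim_win hw; case: (sim_assoc (dyad k.+2) (dyad k.+1) X).
have h2 : winL TB (gadd (dyad k.+1) (gadd (dyad k.+1) X)) q m by apply: le_dd.
by apply: sim_win h2; case: (sim_assoc (dyad k.+1) (dyad k.+1) X).
Qed.

Unset Implicit Arguments.
Set Strict Implicit.

Theorem mainTheorem18 (TB : nat) (k : nat) (hk : 1 <= k) :
  game_eq TB (gadd (dyad k) (dyad k)) (dyad k.-1).
Proof.
case: k hk => [//|k] _ /=; split=> X p m hp; rewrite /outcome_le /o.
- case E: (winL TB (gadd (dyad k) X) p m) => //.
  by rewrite (G1 hp E).
- case E: (winL TB (gadd (gadd (dyad k.+1) (dyad k.+1)) X) p m) => //.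
  by rewrite (G2 hp E).
Qed.
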